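(* Let $(I,<,\mathcal X,R,\mathrm{Mor})$ be a groupoid spine such that $R$ is symmetric and $|I|\ge 3$. Then $(I,<,\mathcal X,R,\mathrm{Mor})$ extends to a groupoid.
   Context: A groupoid spine $(I,<,\mathcal X,R,\mathrm{Mor})$ consists of a linear order $(I,<)$, nonempty sets $\mathcal X=\{X_i:i\in I\}$, a nonempty relation $R\subseteq I^2$ containing all $(i,j)$ with $i<j$, and for each $(i,j)\in R$ a nonempty set $\operatorname{Mor}(i,j)$ of bijections $X_i\to X_j$, such that: if $(i,i)\in R$ then $\mathrm{id}_{X_i}\in\operatorname{Mor}(i,i)$; if $(i,j),(j,i)\in R$ and $f\in\operatorname{Mor}(i,j)$ then $f^{-1}\in\operatorname{Mor}(j,i)$; if $(i,j),(j,k),(i,k)\in R$, $f\in\operatorname{Mor}(i,j)$, $g\in\operatorname{Mor}(j,k)$ then $g\circ f\in\operatorname{Mor}(i,k)$. $R$ is symmetric if $(i,j)\in R$ implies $(j,i)\in R$. The spine extends to a groupoid if one can define $\operatorname{Mor}(i,j)$ for $(i,j)\in I^2\setminus R$ (keeping $\operatorname{Mor}(i,j)$ unchanged for $(i,j)\in R$) so that $(I,<,\mathcal X,I^2,\mathrm{Mor})$ is a groupoid spine. *)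

(* Defs.v *)
Definition strict_linear_order {I : Type} (lt : I -> I -> Prop) : Prop :=
  (forall i, ~ lt i i) /\
  (forall i j k, lt i j -> lt j k -> lt i k) /\
  (forall i j, lt i j \/ i = j \/ lt j i).

Definition bijective_fun {A B : Type} (f : A -> B) : Prop :=
  (forall x y, f x = f y -> x = y) /\ (forall y, exists x, f x = y).

(* A groupoid spine (I,<,X,R,Mor).  Mor i j is a set (predicate) of maps
   X i -> X j; it is only meaningful for (i,j) in R. *)
Definition groupoid_spine (I : Type) (lt : I -> I -> Prop) (X : I -> Type)
  (R : I -> I -> Prop) (Mor : forall i j : I, (X i -> X j) -> Prop) : Prop :=
  strict_linear_order lt /\
  (forall i, inhabited (X i)) /\
  (exists i j, R i j) /\
  (forall i j, lt i j -> R i j) /\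
  (forall i j, R i j -> exists f, Mor i j f) /\
  (forall i j, R i j -> forall f, Mor i j f -> bijective_fun f) /\
  (forall i, R i i -> Mor i i (fun x => x)) /\
  (forall i j, R i j -> R j i -> forall f, Mor i j f ->
     exists g, Mor j i g /\ (forall x, g (f x) = x) /\ (forall y, f (g y) = y)) /\
  (forall i j k, R i j -> R j k -> R i k -> forall f g,
     Mor i j f -> Mor j k g -> Mor i k (fun x => g (f x))).

Definition symmetric_rel {I : Type} (R : I -> I -> Prop) : Prop :=
  forall i j, R i j -> R j i.

Definition at_least_three (I : Type) : Prop :=
  exists a b c : I, a <> b /\ a <> c /\ b <> c.

Definition extends_to_groupoid (I : Type) (lt : I -> I -> Prop) (X : I -> Type)
  (R : I -> I -> Prop) (Mor : forall i j : I, (X i -> X j) -> Prop) : Prop :=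
  exists Mor' : forall i j : I, (X i -> X j) -> Prop,
    (forall i j, R i j -> forall f, Mor' i j f <-> Mor i j f) /\
    groupoid_spine I lt X (fun _ _ => True) Mor'.

(* Main.v *)
Require Import Defs.
From Stdlib Require Import Classical FunctionalExtensionality.

Theorem theorem7p5 (I : Type) (lt : I -> I -> Prop) (X : I -> Type)
  (R : I -> I -> Prop) (Mor : forall i j : I, (X i -> X j) -> Prop) :
  groupoid_spine I lt X R Mor ->
  symmetric_rel R ->
  at_least_three I ->
  extends_to_groupoid I lt X R Mor.
Proof.
  intros Hsp Hsym H3.
  destruct Hsp as (Hlin & Hinh & Hex & Hlt & Hne & Hbij & Hid & Hinv & Hcomp).
  destruct Hlin as (Hirr & Htr & Htri).
  assert (Rdist : forall i j, i <> j -> R i j).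
  { intros i j n; destruct (Htri i j) as [h|[h|h]]; [auto|contradiction|apply Hsym; auto]. }
  assert (Req : forall i j, ~ R i j -> i = j).
  { intros i j n; apply NNPP; intro; apply n, Rdist; auto. }
  assert (Hfresh : forall x y : I, exists k, k <> x /\ k <> y).
  { destruct H3 as (a&b&c&hab&hac&hbc). intros x y.
    destruct (classic (a = x)); destruct (classic (a = y));
    destruct (classic (b = x)); destruct (classic (b = y));
    first [exists a; split; congruence | exists b; split; congruence
          | exists c; split; congruence]. }
  assert (Rerep : forall i j (f : X i -> X j) a (g : X i -> X a) (h : X a -> X j),
    a <> i -> a <> j -> Mor i a g -> Mor a j h -> f = (fun x => h (g x)) ->
    forall c, c <> i -> c <> j -> exists (g' : X i -> X c) (h' : X c -> X j),
      Mor i c g' /\ Mor c j h' /\ f = (fun x => h' (g' x))).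
  { intros i j f a g h ai aj hg hh e c ci cj.
    destruct (classic (c = a)) as [ca|ca].
    { subst c. exists g, h. auto. }
    destruct (Hne a c (Rdist a c ltac:(congruence))) as [p Hp].
    destruct (Hinv a c (Rdist a c ltac:(congruence)) (Rdist c a ltac:(congruence)) p Hp)
      as (q & Hq & Hqp & Hpq).
    exists (fun x => p (g x)), (fun y => h (q y)). split; [|split].
    - apply (Hcomp i a c); auto; apply Rdist; congruence.
    - apply (Hcomp c a j); auto; apply Rdist; congruence.
    - subst f. apply functional_extensionality; intro x; rewrite Hqp; reflexivity. }
  exists (fun i j (f : X i -> X j) => (R i j /\ Mor i j f) \/
    (~ R i j /\ exists k (g : X i -> X k) (h : X k -> X j),
       k <> i /\ k <> j /\ Mor i k g /\ Mor k j h /\ f = (fun x => h (g x)))).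
  split.
  { intros i j Rij f; split.
    - intros [[_ H]|[n _]]; [exact H|contradiction].
    - intro; left; auto. }
  split; [exact (conj Hirr (conj Htr Htri))|].
  split; [exact Hinh|].
  split; [destruct H3 as (a&_); exists a, a; exact Logic.I|].
  split; [intros; exact Logic.I|].
  split.
  { intros i j _. destruct (classic (R i j)) as [r|r].
    - destruct (Hne i j r) as [f hf]; exists f; left; auto.
    - pose proof (Req _ _ r) as e; subst j.
      destruct (Hfresh i i) as [k [k1 k2]].
      destruct (Hne i k (Rdist i k ltac:(congruence))) as [g hg].
      destruct (Hne k i (Rdist k i ltac:(congruence))) as [h hh].
      exists (fun x => h (g x)). right. split; auto. exists k, g, h. repeat split; auto. }
  split.
  { intros i j _ f [[r hf]|[r (k&g&h&k1&k2&hg&hh&e)]].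
    - apply (Hbij i j r f hf).
    - subst f.
      destruct (Hbij _ _ (Rdist i k ltac:(congruence)) g hg) as [gi gs].
      destruct (Hbij _ _ (Rdist k j ltac:(congruence)) h hh) as [hi hs].
      split.
      + intros x y e; apply gi, hi; exact e.
      + intro y; destruct (hs y) as [z hz]; destruct (gs z) as [x hx]; exists x; rewrite hx; exact hz. }
  split.
  { intros i _. destruct (classic (R i i)) as [r|r].
    - left; auto.
    - right; split; auto. destruct (Hfresh i i) as [k [k1 _]].
      destruct (Hne i k (Rdist i k ltac:(congruence))) as [g hg].
      destruct (Hinv i k (Rdist i k ltac:(congruence)) (Rdist k i ltac:(congruence)) g hg)
        as (q & hq & hqg & _).
      exists k, g, q. repeat split; auto.
      apply functional_extensionality; intro x; rewrite hqg; reflexivity. }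
  split.
  { intros i j _ _ f [[r hf]|[r (k&g&h&k1&k2&hg&hh&e)]].
    - destruct (Hinv i j r (Hsym _ _ r) f hf) as (g & hg & a & b).
      exists g; split; [left; split; auto|auto].
    - subst f.
      destruct (Hinv i k (Rdist i k ltac:(congruence)) (Rdist k i ltac:(congruence)) g hg)
        as (gi & hgi & g1 & g2).
      destruct (Hinv k j (Rdist k j ltac:(congruence)) (Rdist j k ltac:(congruence)) h hh)
        as (hi & hhi & h1 & h2).
      exists (fun y => gi (hi y)). split.
      + right. split. { intro; apply r; apply Hsym; auto. }
        exists k, hi, gi. repeat split; auto.
      + split; intros; [rewrite h1, g1 | rewrite g2, h2]; reflexivity. }
  { intros i j k _ _ _ f g Hf Hg.
    destruct (classic (R i k)) as [rik|rik].
    - left; split; auto.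
      destruct Hf as [[rij mf]|[rij (a&g1&h1&a1&a2&hg1&hh1&ef)]].
      + destruct Hg as [[rjk mg]|[rjk (b&g2&h2&b1&b2&hg2&hh2&eg)]].
        * apply (Hcomp i j k); auto.
        * pose proof (Req _ _ rjk) as e; subst k.
          assert (ij : i <> j) by (intro e; subst; contradiction).
          destruct (Hfresh i j) as [c [c1 c2]].
          destruct (Rerep j j g b g2 h2 b1 b2 hg2 hh2 eg c c2 c2) as (g3 & h3 & hg3 & hh3 & e3).
          clear eg; subst g.
          refine (Hcomp i c j _ _ _ (fun x => g3 (f x)) h3 _ _); auto; try (apply Rdist; congruence).
          all: try (apply (Hcomp i j c); auto; apply Rdist; congruence).
      + pose proof (Req _ _ rij) as e; subst j.
        assert (ik : i <> k) by (intro e; subst; contradiction).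
        destruct Hg as [[rjk mg]|[rjk _]]; [|contradiction].
        destruct (Hfresh i k) as [c [c1 c2]].
        destruct (Rerep i i f a g1 h1 a1 a2 hg1 hh1 ef c c1 c1) as (g3 & h3 & hg3 & hh3 & e3).
        clear ef; subst f.
        refine (Hcomp i c k _ _ _ g3 (fun y => g (h3 y)) _ _); auto; try (apply Rdist; congruence).
        all: try (apply (Hcomp c i k); auto; apply Rdist; congruence).
    - pose proof (Req _ _ rik) as e; subst k.
      right; split; auto.
      destruct Hf as [[rij mf]|[rij (a&g1&h1&a1&a2&hg1&hh1&ef)]].
      + destruct Hg as [[rji mg]|[rji _]].
        * assert (ij : j <> i) by (intro e; subst; contradiction).
          exists j, f, g. repeat split; auto.
        * pose proof (Req _ _ rji) as e; subst j. contradiction.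
      + pose proof (Req _ _ rij) as e; subst j.
        destruct Hg as [[rji _]|[_ (b&g2&h2&b1&b2&hg2&hh2&eg)]]; [contradiction|].
        destruct (Hfresh i a) as [c [c1 c2]].
        destruct (Rerep i i g b g2 h2 b1 b2 hg2 hh2 eg c c1 c1) as (g3 & h3 & hg3 & hh3 & e3).
        clear eg; subst f g.
        exists a, g1, (fun y => h3 (g3 (h1 y))). repeat split; auto.
        all: try (refine (Hcomp a c i _ _ _ (fun y => g3 (h1 y)) h3 _ _); auto; try (apply Rdist; congruence)).
        all: try (apply (Hcomp a i c); auto; apply Rdist; congruence). }
Qed.
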